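(* Let $\tau_0,\tau_1,\dots,\tau_r$ ($1\le r\le n$) be $\mathbb Z$-linearly independent elements of $G_t$ such that $\tau_0\in G_t\setminus G$ and $\tau_1,\dots,\tau_r\in G$. Then there exists a $\mathbb K$-automorphism $\varphi$ of $\mathbb K(t,\mathbf x)$ such that $\varphi\circ\tau_0=\sigma_t\circ\varphi$ and $\varphi\circ\tau_i=\sigma_{x_i}\circ\varphi$ for all $i=1,\dots,r$. Furthermore, for any $f\in\mathbb K(t,\mathbf x)$, $f$ has a telescoper of type $(\tau_0;\tau_1,\dots,\tau_r)$ if and only if $\varphi(f)$ has a telescoper of type $(\sigma_t;\sigma_{x_1},\dots,\sigma_{x_r})$.
   Context: $\mathbb K$ is a field of characteristic zero, $\mathbf x=(x_1,\dots,x_m)$, $1\le n\le m$; $\sigma_t,\sigma_{x_i}$ are the $\mathbb K$-automorphisms of $\mathbb K(t,\mathbf x)$ shifting $t$, resp. $x_i$, by $1$ and fixing the other variables. $G=\langle\sigma_{x_1},\dots,\sigma_{x_n}\rangle$, $G_t=\langle\sigma_t,\sigma_{x_1},\dots,\sigma_{x_n}\rangle$. Elements are $\mathbb Z$-linearly independent if $\tau_0^{c_0}\cdots\tau_r^{c_r}=\mathbf 1$ with $c_i\in\mathbb Z$ forces all $c_i=0$. For $\tau\in G_t$, $\Delta_\tau(g)=\tau(g)-g$; $g$ is $(\tau_1,\dots,\tau_r)$-summable in $\mathbb K(t,\mathbf x)$ if $g=\sum_{i=1}^r\Delta_{\tau_i}(h_i)$ with $h_i\in\mathbb K(t,\mathbf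 x)$. For $\tau_0\in G_t\setminus G$ (i.e. $\tau_0$ involves a nonzero power of $\sigma_t$), a telescoper of type $(\tau_0;\tau_1,\dots,\tau_r)$ for $f$ is a nonzero operator $L=\sum_{\ell=0}^\rho e_\ell T_0^\ell$ with $e_\ell\in\mathbb K(t)$, where $T_0$ acts as $\tau_0$, such that $L(f):=\sum_\ell e_\ell\tau_0^\ell(f)$ is $(\tau_1,\dots,\tau_r)$-summable in $\mathbb K(t,\mathbf x)$; a telescoper of type $(\sigma_t;\sigma_{x_1},\dots,\sigma_{x_r})$ is the special case $\tau_0=\sigma_t$, $\tau_i=\sigma_{x_i}$. *)

(* Defs.v *)
From HB Require Import structures.
From mathcomp Require Import all_boot all_order all_algebra.
From mathcomp Require Import fraction generic_quotient.
From mathcomp Require Import mpoly.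
Set Implicit Arguments. Unset Strict Implicit. Unset Printing Implicit Defensive.
Import GRing.Theory.
Local Open Scope ring_scope.

Notation tofrac := (@FracField.tofrac _).
Notation "x %:F" := (tofrac x) : ring_scope.

(* K(t, x_1, ..., x_m) is the fraction field of K[X_0, ..., X_m]:
   variable X_0 is t and X_i is x_i (1 <= i <= m). *)
Definition RF (K : fieldType) (m : nat) : fieldType := {fraction {mpoly K[m.+1]}}.

Definition shift_mpoly (K : fieldType) (m : nat) (a : 'I_m.+1 -> int)
  (p : {mpoly K[m.+1]}) : {mpoly K[m.+1]} :=
  p \mPo [tuple ('X_i + (a i)%:~R) | i < m.+1].

Definition shiftF (K : fieldType) (m : nat) (a : 'I_m.+1 -> int)
  (f : RF K m) : RF K m :=
  let r := repr f in
  (shift_mpoly a (frac r).1)%:F / (shift_mpoly a (frac r).2)%:F.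

Definition sigma_t (K : fieldType) (m : nat) : RF K m -> RF K m :=
  shiftF (fun k : 'I_m.+1 => ((k == 0%N :> nat) : nat)%:Z).
Definition sigma_x (K : fieldType) (m : nat) (i : nat) : RF K m -> RF K m :=
  shiftF (fun k : 'I_m.+1 => ((k == i :> nat) : nat)%:Z).
Arguments sigma_t {K} m _.
Arguments sigma_x {K} m i _.

(* The element sigma_t^(a 0) sigma_{x_1}^(a 1) ... sigma_{x_n}^(a n) of G_t,
   given by its exponent vector a : 'I_n.+1 -> int (x_{n+1},...,x_m fixed). *)
Definition gelt (K : fieldType) (m n : nat) (a : 'I_n.+1 -> int)
  : RF K m -> RF K m :=
  shiftF (fun k : 'I_m.+1 => if (k <= n)%N then a (inord k) else 0).
Arguments gelt {K} m {n} a _.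

Definition gpow (K : fieldType) (m n : nat) (a : 'I_n.+1 -> int) (c : int)
  : RF K m -> RF K m := gelt m (fun j => c * a j).
Arguments gpow {K} m {n} a c _.

Definition Zlin_indep (K : fieldType) (m n r : nat)
  (v : 'I_r.+1 -> 'I_n.+1 -> int) : Prop :=
  forall c : 'I_r.+1 -> int,
    (forall f : RF K m,
       foldr (fun i g => gpow m (v i) (c i) \o g) id (enum 'I_r.+1) f = f) ->
    forall i, c i = 0.

Definition cstF (K : fieldType) (m : nat) (c : K) : RF K m :=
  (c%:MP : {mpoly K[m.+1]})%:F.
Arguments cstF {K} m c.
Definition polyt (K : fieldType) (m : nat) (P : {poly K}) : {mpoly K[m.+1]} :=
  (map_poly (fun c : K => c%:MP) P).['X_0].
Arguments polyt {K} m P.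
Definition inKt (K : fieldType) (m : nat) (e : RF K m) : Prop :=
  exists P Q : {poly K}, Q != 0 /\ e = (polyt m P)%:F / (polyt m Q)%:F.

Definition summable (K : fieldType) (m r : nat)
  (taus : 'I_r -> RF K m -> RF K m) (g : RF K m) : Prop :=
  exists h : 'I_r -> RF K m, g = \sum_(i < r) (taus i (h i) - h i).

(* L(f) for L = sum_l e_l T0^l, T0 acting as tau0; L given by [:: e_0; ...] *)
Definition applyOp (K : fieldType) (m : nat) (tau0 : RF K m -> RF K m)
  (L : seq (RF K m)) (f : RF K m) : RF K m :=
  \sum_(l < size L) L`_l * iter l tau0 f.

Definition has_telescoper (K : fieldType) (m r : nat)
  (tau0 : RF K m -> RF K m) (taus : 'I_r -> RF K m -> RF K m) (f : RF K m)
  : Prop :=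
  exists L : seq (RF K m),
    (forall e, e \in L -> inKt e) /\ has (fun e => e != 0) L /\
    summable taus (applyOp tau0 L f).

(* Main.v *)
Require Import Defs.
From HB Require Import structures.
From mathcomp Require Import all_boot all_order all_algebra.
From mathcomp Require Import fraction generic_quotient.
From mathcomp Require Import mpoly.
From mathcomp Require Import ring.
Import GRing.Theory.
Local Open Scope ring_scope.

Module ExtPart.
Local Open Scope quotient_scope.
Section Ext.
Variable R : idomainType.
Implicit Types p q : R.

Lemma frac_repr (f : {fraction R}) :
  f = (\n_(repr f))%:F / (\d_(repr f))%:F.
Proof.
have hd : (\d_(repr f))%:F != 0 :> {fraction R}.
  by rewrite tofrac_eq0 denom_ratioP.
apply: (mulIf hd); rewrite divfK //.
rewrite -[in LHS](reprK f); set x := repr f.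
unlock tofrac.
rewrite -[X in X = _]/(FracField.mul _ _).
rewrite !piE.
rewrite /x reprK. apply/eqP. rewrite FracField.equivf_def /= !numden_Ratio ?oner_neq0 ?mulr1 ?mulf_neq0 ?denom_ratioP ?oner_neq0 //.
by rewrite mulrC.
Qed.

Lemma repr_den_neq0 (f : {fraction R}) : (\d_(repr f)) != 0.
Proof. exact: denom_ratioP. Qed.

Definition extF (g : R -> R) (f : {fraction R}) : {fraction R} :=
  (g \n_(repr f))%:F / (g \d_(repr f))%:F.

Variable g : {rmorphism R -> R}.
Hypothesis ginj : injective g.

Lemma g_eq0 p : (g p == 0) = (p == 0).
Proof. by apply/eqP/eqP => [h|->]; [apply: ginj; rewrite h rmorph0 | rewrite rmorph0]. Qed.

Lemma extF_frac p q : extF g (p%:F / q%:F) = (g p)%:F / (g q)%:F.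
Proof.
have [->|hq] := eqVneq q 0.
  rewrite !rmorph0 !invr0 !mulr0 /extF.
  have hf := frac_repr 0.
  have hd := repr_den_neq0 (0 : {fraction R}).
  have hdF : (\d_(repr (0 : {fraction R})))%:F != 0 by rewrite tofrac_eq0.
  move: hf => /esym/eqP; rewrite mulf_eq0 invr_eq0 (negPf hdF) orbF tofrac_eq0.
  by move=> /eqP ->; rewrite !rmorph0 !mul0r.
rewrite /extF; set f := p%:F / q%:F.
have hf := frac_repr f.
have hd := repr_den_neq0 f.
move: hf hd; set n := \n_(repr f); set d := \d_(repr f) => hf hd.
have hdF : d%:F != 0 by rewrite tofrac_eq0.
have hgd : (g d)%:F != 0 by rewrite tofrac_eq0 g_eq0.
have hqF : q%:F != 0 by rewrite tofrac_eq0.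
have hgq : (g q)%:F != 0 by rewrite tofrac_eq0 g_eq0.
have e : p * d = n * q.
  apply/eqP; rewrite -tofrac_eq !rmorphM /=.
  have : p%:F / q%:F = n%:F / d%:F by rewrite -hf.
  move=> h.
  have E1 : p%:F * d%:F = p%:F / q%:F * (q%:F * d%:F) by rewrite mulrA divfK.
  have E2 : n%:F * q%:F = n%:F / d%:F * (q%:F * d%:F).
    by rewrite (mulrC q%:F) mulrA divfK.
  by rewrite E1 E2 h.
have e' : g p * g d = g n * g q by rewrite -!rmorphM e.
have e'' : (g p)%:F * (g d)%:F = (g n)%:F * (g q)%:F by rewrite -!tofracM e'.
have E1 : (g n)%:F / (g d)%:F = (g n)%:F * (g q)%:F / ((g d)%:F * (g q)%:F).
  by rewrite -mulf_div divff // mulr1.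
have E2 : (g p)%:F / (g q)%:F = (g p)%:F * (g d)%:F / ((g d)%:F * (g q)%:F).
  by rewrite (mulrC (g d)%:F) -mulf_div divff // mulr1.
by rewrite E1 E2 e''.
Qed.

Lemma extF_tofrac p : extF g p%:F = (g p)%:F.
Proof. by have := extF_frac p 1; rewrite !rmorph1 !divr1. Qed.

Lemma extF_zmod : zmod_morphism (extF g).
Proof.
move=> x y; rewrite [x]frac_repr [y]frac_repr.
set a := \n_(repr x); set b := \d_(repr x); set c := \n_(repr y); set d := \d_(repr y).
have hb : b != 0 by apply: repr_den_neq0.
have hd : d != 0 by apply: repr_den_neq0.
have hbF : b%:F != 0 by rewrite tofrac_eq0.
have hdF : d%:F != 0 by rewrite tofrac_eq0.
have hgbF : (g b)%:F != 0 by rewrite tofrac_eq0 g_eq0.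
have hgdF : (g d)%:F != 0 by rewrite tofrac_eq0 g_eq0.
have E : a%:F / b%:F - c%:F / d%:F = (a * d - c * b)%:F / (b * d)%:F.
  by rewrite -mulNr -tofracN addf_div // -!tofracM -tofracD mulNr.
rewrite E !extF_frac.
have hgb : (g b)%:F != 0 by [].
rewrite -[in RHS]mulNr -[in RHS]tofracN addf_div // -!tofracM -tofracD mulNr.
by rewrite rmorphB !rmorphM.
Qed.

Lemma extF_monoid : monoid_morphism (extF g).
Proof.
split; first by rewrite -tofrac1 extF_tofrac rmorph1.
move=> x y; rewrite [x]frac_repr [y]frac_repr.
set a := \n_(repr x); set b := \d_(repr x); set c := \n_(repr y); set d := \d_(repr y).
have e : a%:F / b%:F * (c%:F / d%:F) = (a * c)%:F / (b * d)%:F.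
  by rewrite !rmorphM /= invfM mulrACA.
by rewrite e !extF_frac !rmorphM /= invfM mulrACA.
Qed.

Definition extR : {rmorphism {fraction R} -> {fraction R}} :=
  HB.pack (extF g) (GRing.isZmodMorphism.Build _ _ (extF g) extF_zmod)
    (GRing.isMonoidMorphism.Build _ _ (extF g) extF_monoid).

Lemma extRE f : extR f = extF g f. Proof. by []. Qed.

End Ext.
Arguments extF {R}.
Arguments frac_repr {R}.
Arguments extF_frac {R}.
Arguments extF_tofrac {R}.
Arguments extR {R}.

Lemma extF_comp (R : idomainType) (g h : {rmorphism R -> R}) (ginj : injective g) f :
  extF g (extF h f) = extF (g \o h) f.
Proof. by rewrite [extF h _]/extF extF_frac. Qed.

Lemma extF_ext (R : idomainType) (g h : R -> R) f : g =1 h -> extF g f = extF h f.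
Proof. by move=> e; rewrite /extF !e. Qed.

Lemma extF_id (R : idomainType) f : extF (@id R) f = f.
Proof. by rewrite /extF -frac_repr. Qed.

Lemma comp_mpolyA (R : comNzRingType) n (p : {mpoly R[n]}) (T1 T2 : n.-tuple {mpoly R[n]}) :
  (p \mPo T1) \mPo T2 = p \mPo [tuple (tnth T1 i \mPo T2) | i < n].
Proof.
rewrite [p \mPo T1]comp_mpolyE [p \mPo _]comp_mpolyE.
rewrite (big_morph (comp_mpoly T2) (comp_mpolyD T2) (comp_mpoly0 T2)).
apply: eq_bigr => mm _.
rewrite comp_mpolyZ rmorph_prod; congr (_ *: _); apply: eq_bigr => i _.
by rewrite rmorphXn tnth_mktuple.
Qed.

Section Aff.
Variables (K : fieldType) (N : nat).
Definition aff (M : 'M[K]_N) (b : 'cV[K]_N) : N.-tuple {mpoly K[N]} :=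
  [tuple (\sum_(j < N) M i j *: 'X_j + (b i ord0)%:MP) | i < N].

Lemma aff_comp M b M' c (p : {mpoly K[N]}) :
  (p \mPo aff M b) \mPo aff M' c = p \mPo aff (M *m M') (M *m c + b).
Proof.
rewrite comp_mpolyA; congr (p \mPo _); apply: eq_from_tnth => i.
rewrite !tnth_mktuple raddfD /= comp_mpolyC raddf_sum /=.
under eq_bigr do rewrite comp_mpolyZ comp_mpolyXU -tnth_nth tnth_mktuple.
rewrite [in RHS]mxE [(M *m c) _ _]mxE rmorphD /= addrA; congr (_ + _).
rewrite rmorph_sum /=.
under eq_bigr do rewrite scalerDr scaler_sumr.
rewrite big_split /=; congr (_ + _); last first.
  by apply: eq_bigr => j _; rewrite mpolyCM mul_mpolyC.
rewrite exchange_big /=; apply: eq_bigr => k _.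
by rewrite mxE scaler_suml; apply: eq_bigr => j _; rewrite scalerA.
Qed.

Lemma aff_id (p : {mpoly K[N]}) : p \mPo aff 1%:M 0 = p.
Proof.
rewrite -[RHS]comp_mpoly_id; congr (p \mPo _); apply: eq_from_tnth => i.
rewrite !tnth_mktuple mxE addr0 (bigD1 i) //= big1 ?addr0 ?mxE ?eqxx ?scale1r //.
by move=> j /negPf hj; rewrite mxE eq_sym hj scale0r.
Qed.

Lemma aff_invl M b (p : {mpoly K[N]}) : M \in unitmx ->
  (p \mPo aff M b) \mPo aff (invmx M) (- (invmx M *m b)) = p.
Proof.
move=> hM; rewrite aff_comp mulmxV // mulmxN mulmxA mulmxV // mul1mx addNr.
exact: aff_id.
Qed.

Lemma aff_invr M b (p : {mpoly K[N]}) : M \in unitmx ->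
  (p \mPo aff (invmx M) (- (invmx M *m b))) \mPo aff M b = p.
Proof.
move=> hM; rewrite aff_comp mulVmx // subrr.
exact: aff_id.
Qed.

Lemma aff_inj M b : M \in unitmx -> injective (comp_mpoly (aff M b)).
Proof.
move=> hM p q h; rewrite -(aff_invl M b p hM) -(aff_invl M b q hM).
by congr (_ \mPo _).
Qed.
End Aff.
Arguments aff {K N}.
Arguments aff_comp {K N}.
Arguments aff_id {K N}.
Arguments aff_invl {K N}.
Arguments aff_invr {K N}.
Arguments aff_inj {K N}.

End ExtPart.
Import ExtPart.

Module LAPart.
Import Num.Theory.
Lemma complete_rows (F : fieldType) r m (B : 'M[F]_(r, m)) (hrm : (r <= m)%N) :
  row_free B -> exists g : 'M[F]_m, g \in unitmx /\
    forall (i : 'I_r) j, g (widen_ord hrm i) j = B i j.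
Proof.
move=> hB.
pose W : 'M[F]_(m, r) := pid_mx r.
pose P' : 'M[F]_(r, m) := pid_mx r.
pose U : 'M[F]_m := pid_mx r.
pose f := W *m B.
have hPW : P' *m W = 1%:M by rewrite /P' /W mul_pid_mx minnn (minn_idPr hrm) pid_mx_1.
have hBf : B = P' *m f by rewrite /f mulmxA hPW mul1mx.
have hUf : U *m f = f by rewrite /f mulmxA /U /W pid_mx_id.
have hrf : \rank f = r.
  apply/eqP; rewrite eqn_leq; apply/andP; split.
    by rewrite (leq_trans (mxrankM_maxr _ _)) // rank_leq_row.
  by rewrite -{1}(eqP hB) {1}hBf mxrankM_maxr.
have hrU : \rank U = r by rewrite /U rank_pid_mx.
have [g hg hfg] : {g : 'M_m | g \in unitmx & U *m f = U *m g}.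
  by apply: complete_unitmx; rewrite hUf hrf hrU.
exists g; split => // i j.
have -> : B = P' *m g by rewrite hBf -hUf hfg mulmxA /P' /U pid_mx_id.
by rewrite /P' (pid_mxErow _ hrm) -rowsubE mxE.
Qed.

Section R0.
Variable K : fieldType.
Hypothesis hK : [pchar K] =i pred0.

Lemma intrK_eq0 (z : int) : (z%:~R == 0 :> K) = (z == 0).
Proof.
have h := (pcharf0P K).1 hK.
case: z => n; first by rewrite /= h.
by rewrite NegzE rmorphN /= oppr_eq0 h.
Qed.

Fact ratrK_zmod : zmod_morphism (@ratr K).
Proof.
have injZtoQ: @injective rat int intr by apply: intr_inj.
have nz_den x: (denq x)%:~R != 0 :> K by rewrite intrK_eq0 denq_eq0.
move=> x y.
apply: (canLR (mulfK (nz_den _))); apply: (mulIf (nz_den x)).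
rewrite mulrAC mulrBl divfK ?nz_den // mulrAC -!rmorphM.
apply: (mulIf (nz_den y)); rewrite mulrAC mulrBl divfK ?nz_den //.
rewrite -!(rmorphM, rmorphB); congr _%:~R; apply: injZtoQ.
rewrite !(rmorphM, rmorphB) /= [_ - _]lock /= -lock !numqE.
by rewrite (mulrAC y) -!mulrBl -mulrA mulrAC !mulrA.
Qed.

Fact ratrK_monoid : monoid_morphism (@ratr K).
Proof.
have injZtoQ: @injective rat int intr by apply: intr_inj.
have nz_den x: (denq x)%:~R != 0 :> K by rewrite intrK_eq0 denq_eq0.
split=> [|x y]; first by rewrite /ratr divr1.
rewrite /ratr mulrC mulrAC; apply: canLR (mulKf (nz_den _)) _; rewrite !mulrA.
do 2!apply: canRL (mulfK (nz_den _)) _; rewrite -!rmorphM; congr _%:~R.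
apply: injZtoQ; rewrite !rmorphM [x * y]lock /= !numqE -lock.
by rewrite -!mulrA mulrA mulrCA -!mulrA (mulrCA y).
Qed.

Definition ratrK : {rmorphism rat -> K} :=
  HB.pack (@ratr K) (GRing.isZmodMorphism.Build _ _ (@ratr K) ratrK_zmod)
    (GRing.isMonoidMorphism.Build _ _ (@ratr K) ratrK_monoid).
End R0.

Lemma int_dep r n (Z : 'M[int]_(r, n)) :
  ~~ row_free (map_mx (intr : int -> rat) Z) ->
  exists c : 'I_r -> int, (exists i, c i != 0) /\
    forall j, \sum_i c i * Z i j = 0.
Proof.
set A := map_mx _ Z => hA.
have : kermx A != 0 by rewrite kermx_eq0.
case/rowV0Pn => u /submxP [w hw] hu0.
have huA : u *m A = 0 by rewrite hw -mulmxA mulmx_ker mulmx0.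
case/rV0Pn: hu0 => k hk.
pose D := \prod_l denq (u 0 l).
pose c i := numq (u 0 i) * \prod_(l | l != i) denq (u 0 l).
have hc i : (c i)%:~R = (D%:~R : rat) * u 0 i.
  rewrite /c /D [in RHS](bigD1 i) //= !intrM numqE; ring.
have hD : D != 0 by apply/prodf_neq0 => l _; rewrite denq_neq0.
exists c; split.
  exists k; rewrite -(intr_eq0 rat) hc mulf_neq0 //.
  by rewrite intr_eq0.
move=> j; apply/eqP; rewrite -(intr_eq0 rat) rmorph_sum /=.
under eq_bigr do rewrite rmorphM /= hc -mulrA.
rewrite -mulr_sumr.
have -> : \sum_i u 0 i * (Z i j)%:~R = (u *m A) 0 j.
  by rewrite mxE; apply: eq_bigr => i _; rewrite /A mxE.
by rewrite huA mxE mulr0.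
Qed.

End LAPart.
Import LAPart.

Section RFm.
Variables (K : fieldType) (m : nat).
Local Notation N := m.+1.
Local Notation P := {mpoly K[m.+1]}.

Definition svec (a : 'I_N -> int) : 'cV[K]_N := \col_i (a i)%:~R.

Definition cA (M : 'M[K]_N) (b : 'cV[K]_N) : {rmorphism P -> P} := comp_mpoly (aff M b).

Lemma shiftF_aff a (f : RF K m) : shiftF a f = extF (cA 1%:M (svec a)) f.
Proof.
rewrite /shiftF /extF /shift_mpoly /cA /=.
suff -> : [tuple 'X_i + (a i)%:~R | i < N] = aff 1%:M (svec a) by [].
apply: eq_from_tnth => i; rewrite !tnth_mktuple (bigD1 i) //= big1 => [|j hj].
  by rewrite !mxE eqxx scale1r addr0 rmorph_int.
by rewrite mxE eq_sym (negPf hj) scale0r.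
Qed.

Lemma extF_aff_comp M b M' c (f : RF K m) : M' \in unitmx ->
  extF (cA M' c) (extF (cA M b) f) = extF (cA (M *m M') (M *m c + b)) f.
Proof.
move=> hM'; rewrite extF_comp; last exact: aff_inj.
by apply: extF_ext => p /=; apply: aff_comp.
Qed.

Lemma extF_aff_id (f : RF K m) : extF (cA 1%:M 0) f = f.
Proof. by rewrite -[RHS]extF_id; apply: extF_ext => p /=; apply: aff_id. Qed.

Lemma shiftF_comp a b (f : RF K m) : shiftF a (shiftF b f) = shiftF (fun i => a i + b i) f.
Proof.
rewrite (shiftF_aff a (shiftF b f)) (shiftF_aff b f).
rewrite (extF_aff_comp 1%:M (svec b) 1%:M (svec a) f (unitmx1 _ _)) !mul1mx shiftF_aff.
congr (extF (cA _ _) f); apply/matrixP => i j; rewrite !mxE.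
by rewrite intrD.
Qed.

Lemma shiftF_ext a b (f : RF K m) : a =1 b -> shiftF a f = shiftF b f.
Proof.
move=> e; rewrite !shiftF_aff; congr (extF (cA _ _) f).
by apply/matrixP => i j; rewrite !mxE e.
Qed.

Lemma shiftF0 (f : RF K m) : shiftF (fun _ => 0) f = f.
Proof.
rewrite shiftF_aff -[RHS]extF_aff_id; congr (extF (cA _ _) f).
by apply/matrixP => i j; rewrite !mxE.
Qed.

Lemma conj_shift M a e (f : RF K m) : M \in unitmx -> M *m svec e = svec a ->
  extF (cA M 0) (shiftF a f) = shiftF e (extF (cA M 0) f).
Proof.
move=> hM he.
rewrite (shiftF_aff a f) (shiftF_aff e (extF (cA M 0) f)).
rewrite (extF_aff_comp 1%:M (svec a) M 0 f hM).
rewrite (extF_aff_comp M 0 1%:M (svec e) f (unitmx1 _ _)).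
rewrite mul1mx mulmx1 mulmx0 add0r addr0 he.
reflexivity.
Qed.

Lemma polyt_aff (A : 'M[K]_N) (Q : {poly K}) : (forall j : 'I_N, j != ord0 -> A ord0 j = 0) ->
  polyt m Q \mPo aff A 0 = polyt m (Q \Po (A ord0 ord0 *: 'X)).
Proof.
move=> hA; rewrite /polyt.
have -> : (map_poly (fun c : K => c%:MP) Q).['X_0] \mPo aff A 0 =
  cA A 0 (map_poly (fun c : K => c%:MP) Q).['X_0] by [].
rewrite -horner_map /= -map_poly_comp.
have -> : cA A 0 'X_0 = A ord0 ord0 *: 'X_0.
  rewrite /cA /= comp_mpolyXU -tnth_nth tnth_mktuple mxE addr0 (bigD1 ord0) //=.
  by rewrite big1 ?addr0 // => j hj; rewrite hA // scale0r.
rewrite map_comp_poly horner_comp; congr (_.[_]).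
  by apply: eq_map_poly => c /=; rewrite /cA /= comp_mpolyC.
by rewrite map_polyZ map_polyX hornerZ hornerX /= mul_mpolyC.
Qed.
End RFm.
Arguments svec {K m}.
Arguments cA {K m}.
Arguments shiftF_aff {K m}.
Arguments extF_aff_comp {K m}.
Arguments extF_aff_id {K m}.
Arguments shiftF_comp {K m}.
Arguments shiftF0 {K m}.
Arguments shiftF_ext {K m}.
Arguments conj_shift {K m}.
Arguments polyt_aff {K m}.

Lemma construct_M (K : fieldType) m r (hrm : (r <= m)%N) (c : 'I_m.+1 -> K)
  (B : 'M[K]_(r, m)) : c ord0 != 0 -> row_free B ->
  exists M : 'M[K]_(m.+1), [/\ M \in unitmx, forall i, M i ord0 = c i,
     forall j, j != ord0 -> M ord0 j = 0 &
     forall (i : 'I_r) k, M (lift ord0 k) (lift ord0 (widen_ord hrm i)) = B i k].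
Proof.
move=> hc hB; have [g [hg hgB]] := @complete_rows K r m B hrm hB.
pose M : 'M[K]_(m.+1) := \matrix_(i, j)
  match unlift ord0 j with
  | None => c i
  | Some j' => match unlift ord0 i with None => 0 | Some i' => g j' i' end
  end.
have M0 : forall j, j != ord0 -> M ord0 j = 0.
  move=> j hj; rewrite mxE unlift_none.
  by case: (unliftP ord0 j) hj => [j' ->|-> /eqP] //.
exists M; split => //.
- rewrite unitmxE unitfE (expand_det_row _ ord0) (bigD1 ord0) //= big1 ?addr0.
    rewrite /cofactor addn0 expr0 mul1r mxE unlift_none mulf_neq0 //.
    have -> : row' ord0 (col' ord0 M) = g^T.
      by apply/matrixP => i j; rewrite !mxE !liftK.
    by rewrite det_tr -unitfE -unitmxE.
  by move=> j hj; rewrite M0 ?mul0r.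
- by move=> i; rewrite mxE unlift_none.
- by move=> i k; rewrite mxE !liftK hgB.
Qed.

Lemma inv_row0 (K : fieldType) m (M : 'M[K]_(m.+1)) (c : K) : M \in unitmx -> c != 0 ->
  (forall j, M ord0 j = if j == ord0 then c else 0) ->
  forall j, (invmx M) ord0 j = if j == ord0 then c^-1 else 0.
Proof.
move=> hM hc h0 j.
have := congr1 (fun A : 'M[K]_(m.+1) => A ord0 j) (mulmxV hM).
rewrite !mxE (bigD1 ord0) //= big1 ?addr0 => [|k hk]; last by rewrite h0 (negPf hk) mul0r.
rewrite h0 eqxx => e.
have -> : invmx M ord0 j = c^-1 * (c * invmx M ord0 j) by rewrite mulKf.
by rewrite e eq_sym; case: (j == ord0); rewrite ?mulr1 ?mulr0.
Qed.

Lemma iter_conj (T : Type) (al t s : T -> T) : (forall g, al (t g) = s (al g)) ->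
  forall l g, al (iter l t g) = iter l s (al g).
Proof. by move=> h; elim=> //= l IH g; rewrite h IH. Qed.

Lemma transfer (K : fieldType) m r (al : {rmorphism RF K m -> RF K m})
  (t0 s0 : RF K m -> RF K m) (ts ss : 'I_r -> RF K m -> RF K m) (f : RF K m) :
  (forall g, al (t0 g) = s0 (al g)) -> (forall i g, al (ts i g) = ss i (al g)) ->
  (forall e, inKt e -> inKt (al e)) ->
  has_telescoper t0 ts f -> has_telescoper s0 ss (al f).
Proof.
move=> h0 hi hK [L [hL [hnz [h hs]]]]; exists (map al L); split; [|split].
- by move=> e /mapP [e' he' ->]; apply: hK; apply: hL.
- by rewrite has_map; move: hnz; apply: sub_has => e /=; rewrite fmorph_eq0.
- exists (fun i => al (h i)).
  have -> : applyOp s0 [seq al i | i <- L] (al f) = al (applyOp t0 L f).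
    rewrite /applyOp size_map rmorph_sum; apply: eq_bigr => l _.
    by rewrite rmorphM (nth_map 0) ?rmorph0 // (@iter_conj _ al t0 s0 h0).
  rewrite hs rmorph_sum; apply: eq_bigr => i _.
  by rewrite rmorphB hi.
Qed.

Lemma inKt_aff (K : fieldType) m (A : 'M[K]_(m.+1)) (hA : A \in unitmx) e :
  A ord0 ord0 != 0 -> (forall j : 'I_m.+1, j != ord0 -> A ord0 j = 0) ->
  inKt e -> inKt (extF (cA A 0) e).
Proof.
move=> ha hA0 [P [Q [hQ ->]]].
rewrite (extF_frac _ (aff_inj A 0 hA)) /cA /= !polyt_aff //.
exists (P \Po (A ord0 ord0 *: 'X)), (Q \Po (A ord0 ord0 *: 'X)); split => //.
by rewrite -size_poly_eq0 size_comp_poly2 ?size_poly_eq0 // size_scale // size_polyX.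
Qed.

Theorem mainTheorem19 (K : fieldType) (m n r : nat)
  (charK0 : [pchar K] =i pred0)
  (hn1 : (1 <= n)%N) (hnm : (n <= m)%N) (hr1 : (1 <= r)%N) (hrn : (r <= n)%N)
  (v : 'I_r.+1 -> 'I_n.+1 -> int)
  (hindep : Zlin_indep K m v)
  (htau0 : v ord0 ord0 != 0)
  (htaui : forall i : 'I_r, v (lift ord0 i) ord0 = 0) :
  exists phi : {rmorphism RF K m -> RF K m},
    [/\ bijective phi,
        (forall c : K, phi (cstF m c) = cstF m c),
        phi \o gelt m (v ord0) =1 sigma_t m \o phi,
        (forall i : 'I_r,
           phi \o gelt m (v (lift ord0 i)) =1 sigma_x m i.+1 \o phi) &
        (forall f : RF K m,
           has_telescoper (gelt m (v ord0))
             (fun i : 'I_r => gelt m (v (lift ord0 i))) f <->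
           has_telescoper (sigma_t m)
             (fun i : 'I_r => sigma_x m i.+1) (phi f))].
Proof.
have hrm : (r <= m)%N := leq_trans hrn hnm.
pose aint (a : 'I_n.+1 -> int) (k : nat) : int := if (k <= n)%N then a (inord k) else 0.
have inord0 : inord 0 = ord0 :> 'I_n.+1 by apply: val_inj; rewrite /= inordK.
pose Z : 'M[int]_(r, m) := \matrix_(i, k) aint (v (lift ord0 i)) k.+1.
pose B : 'M[K]_(r, m) := map_mx intr Z.
have hB : row_free B.
  have -> : B = map_mx (@ratrK K charK0) (map_mx intr Z).
    by apply/matrixP => i j; rewrite !mxE /= ratr_int.
  rewrite row_free_map; apply/negPn/negP => hnf.
  have [c [[i0 hi0] hc]] := int_dep _ _ _ hnf.
  pose c' (j : 'I_r.+1) : int := if unlift ord0 j is Some i then c i else 0.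
  suff : c' (lift ord0 i0) = 0 by rewrite /c' liftK => e; rewrite e eqxx in hi0.
  apply: hindep => f.
  have hfold : forall (s : seq 'I_r.+1) (f : RF K m),
      foldr (fun i g => gpow m (v i) (c' i) \o g) id s f =
      shiftF (fun k : 'I_m.+1 => \sum_(i <- s) aint (fun j => c' i * v i j) k) f.
    elim => [|x s IH] g /=.
      by rewrite -[LHS]shiftF0; apply: shiftF_ext => k; rewrite big_nil.
    rewrite IH /gpow /gelt shiftF_comp; apply: shiftF_ext => k.
    by rewrite big_cons.
  rewrite hfold -[RHS]shiftF0; apply: shiftF_ext => k.
  rewrite big_enum /= big_ord_recl /c' unlift_none.
  have -> : aint (fun j => 0 * v ord0 j) k = 0 by rewrite /aint; case: ifP; rewrite ?mul0r.
  rewrite add0r.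
  have e : forall i : 'I_r, aint (fun j => c' (lift ord0 i) * v (lift ord0 i) j) k
       = c i * aint (v (lift ord0 i)) k.
    by move=> i; rewrite /aint /c' liftK; case: ifP; rewrite ?mulr0.
  rewrite /c' in e; under eq_bigr do rewrite e.
  case: (unliftP ord0 k) => [k' ->|->].
    rewrite -[RHS](hc k'); apply: eq_bigr => i _; congr (_ * _).
    by rewrite /Z mxE.
  by rewrite big1 // => i _; rewrite /aint /= inord0 htaui mulr0.
pose c0 (i : 'I_m.+1) : K := (aint (v ord0) i)%:~R.
have hc0 : c0 ord0 != 0 by rewrite /c0 /aint /= inord0 (@intrK_eq0 K charK0).
have [M [hM hM0 hMcol0 hMcol]] := @construct_M K m r hrm c0 B hc0 hB.
have hMi : invmx M \in unitmx by rewrite unitmx_inv.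
pose phi := extR (cA M 0) (aff_inj M 0 hM).
pose psi := extR (cA (invmx M) 0) (aff_inj (invmx M) 0 hMi).
have phipsi : forall f, phi (psi f) = f.
  move=> f; rewrite /phi /psi !extRE extF_aff_comp // mulVmx // mulmx0 addr0.
  exact: extF_aff_id.
have psiphi : forall f, psi (phi f) = f.
  move=> f; rewrite /phi /psi !extRE extF_aff_comp ?unitmx_inv // mulmxV // mulmx0 addr0.
  exact: extF_aff_id.
have conj0 : forall f, phi (gelt m (v ord0) f) = sigma_t m (phi f).
  move=> f; rewrite /phi !extRE; apply: conj_shift => //.
  apply/matrixP => i j; rewrite !mxE (bigD1 ord0) //= big1 => [|k hk].
    by rewrite !mxE /= mulr1 addr0 hM0.
  rewrite /svec mxE.
  by move: hk; rewrite -val_eqE /= => /negbTE ->; rewrite mulr0.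
have conji : forall (i : 'I_r) f,
    phi (gelt m (v (lift ord0 i)) f) = sigma_x m i.+1 (phi f).
  move=> i f; rewrite /phi !extRE; apply: conj_shift => //.
  apply/matrixP => k j; rewrite !mxE (bigD1 (lift ord0 (widen_ord hrm i))) //=.
  rewrite big1 => [|l hl].
    rewrite /svec !mxE /= eqxx mulr1 addr0.
    case: (unliftP ord0 k) => [k' ->|->].
      by rewrite hMcol /B /Z !mxE.
    by rewrite hMcol0 // /aint /= inord0 htaui.
  rewrite /svec mxE.
  have -> : (l == i.+1 :> nat) = false.
    apply/negbTE; apply: contra hl => /eqP e; apply/eqP/val_inj.
    by rewrite /= e.
  by rewrite mulr0.
have hMrow0 : forall j, M ord0 j = if j == ord0 then c0 ord0 else 0.
  by move=> j; case: eqP => [->|/eqP hj]; [rewrite hM0 | rewrite hMcol0].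
have hMi0 := @inv_row0 K m M (c0 ord0) hM hc0 hMrow0.
have hKphi : forall e, inKt e -> inKt (phi e).
  move=> e he; rewrite /phi extRE; apply: inKt_aff => //.
  by rewrite hM0.
have hKpsi : forall e, inKt e -> inKt (psi e).
  move=> e he; rewrite /psi extRE; apply: inKt_aff => //.
    by rewrite hMi0 eqxx invr_eq0.
  by move=> j hj; rewrite hMi0 (negbTE hj).
exists phi; split.
- by exists psi.
- move=> c; rewrite /phi extRE /cstF (extF_tofrac _ (aff_inj M 0 hM)).
  by rewrite /cA /= comp_mpolyC.
- by move=> f /=; apply: conj0.
- by move=> i f /=; apply: conji.
move=> f; split => h.
  exact: (transfer _ _ _ phi _ _ _ _ _ conj0 conji hKphi h).
rewrite -(psiphi f).
apply: (transfer _ _ _ psi _ _ _ _ _ _ _ hKpsi h).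
  by move=> g; rewrite -{1}(phipsi g) -conj0 psiphi.
by move=> i g; rewrite -{1}(phipsi g) -conji psiphi.
Qed.
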